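(* For every $\varphi\in\Phi_\mathbb{Z}$, $\dim(\varphi)$ is an integer and $$\dim(\varphi)\equiv-\sum_{j=1}^d j\,\mu_{1,j}(\varphi)\pmod{b-1}.$$
   Context: Fix integers $b\ge2$, $d\ge1$. A function $f:\mathbb{R}\to\mathbb{R}\cup\{-\infty\}$ is called strictly increasing if it is nondecreasing and strictly increasing on the set where it is finite. $\Phi$ is the set of $d$-tuples $\varphi=(\varphi_1,\dots,\varphi_d)$ of functions $\mathbb{R}\to\mathbb{R}\cup\{-\infty\}$ such that: (1) $\varphi_1\ge\dots\ge\varphi_d$; (2) each $\varphi_i$ is strictly increasing and right-continuous; (3) for each $i$ there is $q_i\in\mathbb{R}$ such that $\varphi_i$ is finite exactly on $[q_i,+\infty[$, piecewise affine there with derivative $b$ almost everywhere, and $\varphi_i(q)=bq-q_i$ for $q$ large; (4) there exist strictly increasing right-continuous $\psi_1\le\dots\le\psi_d:\mathbb{R}\to\mathbb{R}\cup\{-\infty\}$ with $\#\{i:\varphi_i(q)=\mu\}=\#\{j:\psi_j(\mu)=q\}$ for all $(q,\mu)\in\mathbb{R}^2$ (uniquely determined). $\Phi_\mathbb{Z}$ is the set of $\varphi\in\Phi$ such that each $q_i\in\mathbb{Z}$ and each $\varphi_i$ has all discontinuity points in $\frac1b\mathbb{Z}$. Set $\varphi_i(-\infty)=\psi_j(-\infty)=-\infty$. For $1\le j\le d$, $\mu_{1,j}(\varphi)$ is the infimum of the reals $\mu$ such that either $\varphi_1(\psi_j(\mu))>\mu$, or $\varphi_1(\psi_j(\mu))=\mu$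 and $\#\{i'\le 1:\varphi_{i'}(q)=\mu\}\le\#\{j'\le j:\psi_{j'}(\mu)=q\}$ with $q=\psi_j(\mu)$. With $\mathrm{Leb}$ the Lebesgue measure, $\dim(\varphi):=\sum_{1\le i<i'\le d}\mathrm{Leb}(\varphi_{i'}(\mathbb{R})\setminus\varphi_i(\mathbb{R}))$. *)

(* Defs.v *)
From Stdlib Require Import Reals Lra Lia ZArith.
Open Scope R_scope.

(* R ∪ {-∞} is represented by [option R]: [None] = -∞, [Some x] = x. *)
Definition ER := option R.

Definition ole (x y : ER) : Prop :=
  match x, y with
  | None, _ => True
  | Some _, None => False
  | Some a, Some c => a <= c
  end.

Definition olt (x y : ER) : Prop :=
  match x, y with
  | _, None => False
  | None, Some _ => True
  | Some a, Some c => a < c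
  end.

Definition eqb_ER (x y : ER) : bool :=
  match x, y with
  | None, None => true
  | Some a, Some c => if Req_EM_T a c then true else false
  | _, _ => false
  end.

Definition ext_app (f : R -> ER) (o : ER) : ER :=
  match o with None => None | Some q => f q end.

(* strictly increasing in the paper's sense *)
Definition strictly_incr (f : R -> ER) : Prop :=
  (forall x y, x <= y -> ole (f x) (f y)) /\
  (forall x y, x < y -> f x <> None -> f y <> None -> olt (f x) (f y)).

Definition right_cont (f : R -> ER) : Prop :=
  forall x,
    match f x with
    | Some v => forall eps, 0 < eps -> exists delta, 0 < delta /\
                 forall y, x <= y < x + delta ->
                   exists w, f y = Some w /\ Rabs (w - v) < eps
    | None => forall M, exists delta, 0 < delta /\
                 forall y, x <= y < x + delta -> ole (f y) (Some M)
    end.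

Definition cont_at (f : R -> ER) (x : R) : Prop :=
  match f x with
  | Some v => forall eps, 0 < eps -> exists delta, 0 < delta /\
               forall y, Rabs (y - x) < delta ->
                 exists w, f y = Some w /\ Rabs (w - v) < eps
  | None => forall M, exists delta, 0 < delta /\
               forall y, Rabs (y - x) < delta -> ole (f y) (Some M)
  end.

Definition pw_affine_slope (b : R) (f : R -> ER) (q : R) : Prop :=
  exists (m : nat) (t c : nat -> R),
    t O = q /\
    (forall k, (k < m)%nat -> t k < t (S k)) /\
    (forall k, (k < m)%nat -> forall x, t k < x < t (S k) -> f x = Some (b * x + c k)) /\
    (forall x, t m < x -> f x = Some (b * x + c m)).

Definition cond3 (b : nat) (f : R -> ER) (q : R) : Prop :=
  (forall x, f x <> None <-> q <= x) /\
  pw_affine_slope (INR b) f q /\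
  (exists T, forall x, T <= x -> f x = Some (INR b * x - q)).

Fixpoint count_idx (n : nat) (p : nat -> bool) : nat :=
  match n with
  | O => O
  | S m => (count_idx m p + (if p (S m) then 1 else 0))%nat
  end.

Fixpoint rsum (n : nat) (f : nat -> R) : R :=
  match n with
  | O => 0
  | S m => rsum m f + f (S m)
  end.

Definition inPhi (b d : nat) (phi psi : nat -> R -> ER) : Prop :=
  (forall i, (1 <= i < d)%nat -> forall q, ole (phi (S i) q) (phi i q)) /\
  (forall i, (1 <= i <= d)%nat -> strictly_incr (phi i) /\ right_cont (phi i)) /\
  (forall i, (1 <= i <= d)%nat -> exists q : R, cond3 b (phi i) q) /\
  (forall j, (1 <= j < d)%nat -> forall mu, ole (psi j mu) (psi (S j) mu)) /\
  (forall j, (1 <= j <= d)%nat -> strictly_incr (psi j) /\ right_cont (psi j)) /\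
  (forall q mu : R,
     count_idx d (fun i => eqb_ER (phi i q) (Some mu)) =
     count_idx d (fun j => eqb_ER (psi j mu) (Some q))).

Definition inPhiZ (b d : nat) (phi psi : nat -> R -> ER) : Prop :=
  inPhi b d phi psi /\
  (forall i, (1 <= i <= d)%nat ->
     (exists qi : Z, cond3 b (phi i) (IZR qi)) /\
     (forall x, ~ cont_at (phi i) x -> exists n : Z, x = IZR n / INR b)).

Definition is_inf (S : R -> Prop) (m : R) : Prop :=
  (forall s, S s -> m <= s) /\ (forall m', (forall s, S s -> m' <= s) -> m' <= m).

(* Lebesgue (outer) measure: infimum of total lengths of countable covers
   by open intervals (equals the Lebesgue measure on measurable sets). *)
Definition is_Leb (A : R -> Prop) (m : R) : Prop :=
  is_inf (fun s => exists a c : nat -> R,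
            (forall n, a n <= c n) /\
            (forall x, A x -> exists n, a n < x < c n) /\
            infinite_sum (fun n => c n - a n) s) m.

Definition image_diff (phi : nat -> R -> ER) (i i' : nat) (mu : R) : Prop :=
  (exists q, phi i' q = Some mu) /\ ~ (exists q, phi i q = Some mu).

(* the set whose infimum is μ_{1,j}(φ) *)
Definition mu1_set (phi psi : nat -> R -> ER) (j : nat) (mu : R) : Prop :=
  olt (Some mu) (ext_app (phi 1%nat) (psi j mu)) \/
  (exists q : R, psi j mu = Some q /\ phi 1%nat q = Some mu /\
   (count_idx 1 (fun i' => eqb_ER (phi i' q) (Some mu))
    <= count_idx j (fun j' => eqb_ER (psi j' mu) (Some q)))%nat).
  (* note: ext_app (phi 1) (psi j mu) = Some mu forces psi j mu = Some q *)

(* dim(φ) = D, given the values L i i' = Leb(φ_{i'}(R) \ φ_i(R)) *)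
Definition dim_sum (d : nat) (L : nat -> nat -> R) : R :=
  rsum d (fun i' => rsum (i' - 1) (fun i => L i i')).

(* Main.v *)
Require Import Defs.
From Stdlib Require Import Reals Lra Lia ZArith List Classical ClassicalEpsilon.
Open Scope R_scope.

Ltac unmm := unfold Rmax, Rmin in *; repeat match goal with
  | |- context [Rle_dec ?a ?b] => destruct (Rle_dec a b)
  | H: context [Rle_dec ?a ?b] |- _ => destruct (Rle_dec a b)
  end.

Fixpoint ssum (n : nat) (f : nat -> R) : R :=
  match n with O => 0 | S m => ssum m f + f m end.

Lemma ssum_ext n f g : (forall k, (k < n)%nat -> f k = g k) -> ssum n f = ssum n g.
Proof. induction n; simpl; intros; auto. rewrite IHn, (H n); auto. Qed.

Lemma ssum_le n f g : (forall k, (k < n)%nat -> f k <= g k) -> ssum n f <= ssum n g.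
Proof. induction n; simpl; intros. lra. assert (f n <= g n) by auto.
  assert (ssum n f <= ssum n g) by auto. lra. Qed.

Lemma ssum_plus n f g : ssum n (fun k => f k + g k) = ssum n f + ssum n g.
Proof. induction n; simpl; lra. Qed.

Lemma ssum_scal n c f : ssum n (fun k => c * f k) = c * ssum n f.
Proof. induction n; simpl. lra. rewrite IHn; ring. Qed.

Lemma ssum_const n c : ssum n (fun _ => c) = INR n * c.
Proof. induction n; simpl ssum. simpl; lra. rewrite IHn, S_INR; ring. Qed.

Lemma ssum_swap n N (F : nat -> nat -> R) :
  ssum n (fun k => ssum N (fun m => F k m)) = ssum N (fun m => ssum n (fun k => F k m)).
Proof. induction n; simpl. induction N; simpl; lra.
  rewrite IHn, <- ssum_plus. reflexivity. Qed.

Lemma ssum_nonneg n f : (forall k, (k < n)%nat -> 0 <= f k) -> 0 <= ssum n f.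
Proof. intros. replace 0 with (ssum n (fun _ => 0)). apply ssum_le; auto.
  rewrite ssum_const; ring. Qed.

Lemma ssum_sum_f n f : ssum (S n) f = sum_f_R0 f n.
Proof. induction n. simpl; lra. change (ssum (S (S n)) f) with (ssum (S n) f + f (S n)). rewrite IHn. reflexivity. Qed.

Definition clip (u w a c : R) := Rmax 0 (Rmin c w - Rmax a u).

Lemma clip_nonneg u w a c : 0 <= clip u w a c.
Proof. unfold clip; unmm; lra. Qed.

Lemma clip_split u w a' c' an cn : a' <= c' -> a' <= w -> u <= c' ->
  clip u a' an cn + clip c' w an cn <= clip u w an cn.
Proof. intros; unfold clip; unmm; lra. Qed.

Lemma finite_cover (a c : nat -> R) : forall N u w,
  (forall x, u <= x <= w -> exists n, (n < N)%nat /\ a n < x < c n) ->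
  w - u <= ssum N (fun n => clip u w (a n) (c n)).
Proof.
  induction N; intros u w H.
  - simpl. destruct (Rle_dec u w). destruct (H u) as [n [Hn _]]. lra. lia. lra.
  - simpl. pose proof (clip_nonneg u w (a N) (c N)) as Hc.
    destruct (Rle_dec (c N) (a N)) as [Hca|Hca].
    + assert (w - u <= ssum N (fun n => clip u w (a n) (c n))).
      { apply IHN. intros x Hx. destruct (H x Hx) as [n [Hn Hx2]].
        destruct (Nat.eq_dec n N). subst. lra. exists n; split; [lia|auto]. }
      lra.
    + set (a' := Rmin (a N) w). set (c' := Rmax (c N) u).
      assert (H1 : a' - u <= ssum N (fun n => clip u a' (a n) (c n))).
      { apply IHN. intros x Hx. destruct (H x) as [n [Hn Hx2]]. unfold a' in *; unmm; lra.
        destruct (Nat.eq_dec n N). subst. unfold a' in *; unmm; lra. exists n; split; [lia|auto]. }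
      assert (H2 : w - c' <= ssum N (fun n => clip c' w (a n) (c n))).
      { apply IHN. intros x Hx. destruct (H x) as [n [Hn Hx2]]. unfold c' in *; unmm; lra.
        destruct (Nat.eq_dec n N). subst. unfold c' in *; unmm; lra. exists n; split; [lia|auto]. }
      assert (H3 : ssum N (fun n => clip u a' (a n) (c n)) + ssum N (fun n => clip c' w (a n) (c n))
                   <= ssum N (fun n => clip u w (a n) (c n))).
      { rewrite <- ssum_plus. apply ssum_le. intros. apply clip_split; unfold a', c'; unmm; lra. }
      assert (0 <= ssum N (fun n => clip u a' (a n) (c n))) by (apply ssum_nonneg; intros; apply clip_nonneg).
      assert (0 <= ssum N (fun n => clip c' w (a n) (c n))) by (apply ssum_nonneg; intros; apply clip_nonneg).
      unfold a', c', clip in *; unmm; lra.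
Qed.

Lemma cells_clip (g w act : nat -> R) (a c : R) : forall n,
  (forall k, (k < n)%nat -> g k <= w k <= g (S k)) ->
  (forall k, (k < n)%nat -> 0 <= act k <= 1) ->
  ssum n (fun k => act k * clip (g k) (w k) a c) <= Rmax 0 (Rmin c (g n) - a).
Proof.
  induction n; intros Hw Ha; simpl.
  - unmm; lra.
  - assert (IH : ssum n (fun k => act k * clip (g k) (w k) a c) <= Rmax 0 (Rmin c (g n) - a))
      by (apply IHn; intros; [apply Hw|apply Ha]; lia).
    assert (H1 := Hw n (Nat.lt_succ_diag_r n)). assert (H2 := Ha n (Nat.lt_succ_diag_r n)).
    assert (act n * clip (g n) (w n) a c <= clip (g n) (w n) a c).
    { pose proof (clip_nonneg (g n) (w n) a c). nra. }
    unfold clip in *; unmm; lra.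
Qed.

Lemma ssum_minus n f g : ssum n (fun k => f k - g k) = ssum n f - ssum n g.
Proof. induction n; simpl; lra. Qed.

Lemma list_nat_bound (l : list R) : exists N, forall y n, In y l -> y = INR n -> (n < N)%nat.
Proof.
  induction l as [|y l [N HN]].
  - exists O; intros y n H; destruct H.
  - destruct (classic (exists n, y = INR n)) as [[k Hk]|Hk].
    + exists (Nat.max N (S k)). intros y0 n [<-|Hin] Hy.
      * subst. apply INR_eq in Hy. subst. lia.
      * specialize (HN y0 n Hin Hy). lia.
    + exists N. intros y0 n [<-|Hin] Hy. exfalso; eauto. eauto.
Qed.

Lemma compact_cover (a c : nat -> R) (u w : R) :
  (forall x, u <= x <= w -> exists n, a n < x < c n) ->
  exists N, forall x, u <= x <= w -> exists n, (n < N)%nat /\ a n < x < c n.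
Proof.
  intros H.
  set (fam := fun y x => exists n, y = INR n /\ a n < x < c n).
  assert (cf : forall y, (exists x, fam y x) -> (fun y => exists n, y = INR n) y).
  { intros y [x [n [Hn _]]]. exists n; auto. }
  set (F := mkfamily (fun y => exists n, y = INR n) fam cf).
  destruct (compact_P3 u w F) as [D [Hcov [l Hl]]].
  - split.
    + intros x Hx. destruct (H x Hx) as [n Hn]. exists (INR n). exists n; auto.
    + intros y x [n [Hy Hx]]. 
      assert (Hd : 0 < Rmin (x - a n) (c n - x)) by (unfold Rmin; destruct Rle_dec; lra).
      exists (mkposreal _ Hd). intros z Hz. unfold disc in Hz; simpl in Hz.
      exists n. split; auto. unfold Rmin in Hz; destruct Rle_dec;
        apply Rabs_def2 in Hz; lra.
  - destruct (list_nat_bound l) as [N HN]. exists N. intros x Hx.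
    destruct (Hcov x Hx) as [y [[n [Hy Hn]] HD]]. exists n. split; auto.
    apply (HN y); auto. apply Hl. split; auto. exists n; auto.
Qed.

Lemma sum_le_limit (h : nat -> R) (s : R) N :
  (forall k, 0 <= h k) -> infinite_sum h s -> ssum N h <= s.
Proof.
  intros Hp Hs.
  assert (G : forall n, sum_f_R0 h n <= s).
  { apply growing_ineq. intro n; simpl. pose proof (Hp (S n)); lra. exact Hs. }
  destruct N. simpl. pose proof (G O); simpl in *; pose proof (Hp O); lra.
  rewrite ssum_sum_f. apply G.
Qed.

Lemma in_cell (g : nat -> R) n : (forall k, (k < n)%nat -> g k < g (S k)) ->
  forall x, g O <= x < g n -> exists k, (k < n)%nat /\ g k <= x < g (S k).
Proof.
  induction n; intros Hg x Hx. lra.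
  destruct (Rlt_dec x (g n)).
  - destruct (IHn (fun k Hk => Hg k ltac:(lia)) x) as [k [Hk Hk2]]. lra. exists k; split; auto; lia.
  - exists n; split. lia. lra.
Qed.

Lemma grid_mono (g : nat -> R) n : (forall k, (k < n)%nat -> g k < g (S k)) ->
  forall i j, (i < j <= n)%nat -> g i < g j.
Proof.
  intros Hg i j [Hij Hjn]. induction j. lia.
  destruct (Nat.eq_dec i j). subst. apply Hg; lia.
  apply Rlt_trans with (g j). apply IHj; lia. apply Hg; lia.
Qed.

Lemma sum_eventually (h : nat -> R) n : (forall k, (n <= k)%nat -> h k = 0) ->
  infinite_sum h (ssum n h).
Proof.
  intros Hz eps He. exists n. intros m Hm. rewrite <- ssum_sum_f.
  replace (ssum (S m) h) with (ssum n h). unfold Rdist. rewrite Rminus_diag, Rabs_R0; lra.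
  clear He. induction Hm. simpl. rewrite Hz; auto; lra.
  simpl. simpl in IHHm. rewrite IHHm, (Hz (S m)). ring. lia.
Qed.

Lemma multi_compact (an cn : nat -> R) (P : nat -> Prop) (u w : nat -> R) n :
  (forall k, (k < n)%nat -> P k -> exists N, forall x, u k <= x <= w k ->
        exists m, (m < N)%nat /\ an m < x < cn m) ->
  exists N, forall k, (k < n)%nat -> P k -> forall x, u k <= x <= w k ->
        exists m, (m < N)%nat /\ an m < x < cn m.
Proof.
  induction n as [|n' IH]; intros H.
  - exists O; intros; lia.
  - destruct IH as [N1 HN1]. intros; apply H; auto; lia.
    destruct (classic (P n')) as [Ha1|Ha1].
    + destruct (H n' ltac:(lia) Ha1) as [N2 HN2].
      exists (Nat.max N1 N2). intros k Hk Hak x Hx.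
      destruct (Nat.eq_dec k n'). subst. destruct (HN2 x Hx) as [m [Hm1 Hm2]]. exists m; split; auto; lia.
      destruct (HN1 k ltac:(lia) Hak x Hx) as [m [Hm1 Hm2]]. exists m; split; auto; lia.
    + exists N1. intros k Hk Hak x Hx. destruct (Nat.eq_dec k n'). subst; contradiction.
      apply (HN1 k); auto; lia.
Qed.

Lemma leb_grid (g : nat -> R) (n : nat) (A : R -> Prop) (a : R -> R) :
  (forall k, (k < n)%nat -> g k < g (S k)) ->
  (forall x, A x <-> a x = 1) -> (forall x, a x = 0 \/ a x = 1) ->
  (forall x, A x -> g O <= x < g n) ->
  (forall k x, (k < n)%nat -> g k <= x < g (S k) -> a x = a (g k)) ->
  is_Leb A (ssum n (fun k => a (g k) * (g (S k) - g k))).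
Proof.
  intros Hg HA H01 Hsupp Hcell. set (V := ssum n (fun k => a (g k) * (g (S k) - g k))).
  split.
  -
    intros s [an [cn [Hac [Hcov Hsum]]]].
    assert (Hd : forall delta, 0 < delta -> V <= s + INR n * delta).
    { intros delta Hdel.
      set (w := fun k => Rmax (g k) (g (S k) - delta)).
      assert (Hcl : forall k, (k < n)%nat -> a (g k) = 1 -> forall x, g k <= x <= w k ->
                     exists m, an m < x < cn m).
      { intros k Hk Ha1 x Hx. apply Hcov. apply HA. rewrite (Hcell k x Hk). auto.
        specialize (Hg k Hk). unfold w in Hx; unmm; lra. }
      assert (HN : exists N, forall k, (k < n)%nat -> a (g k) = 1 -> forall x, g k <= x <= w k ->
                     exists m, (m < N)%nat /\ an m < x < cn m).
      { apply multi_compact. intros k Hk Ha1; apply compact_cover; apply Hcl; auto. }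
      destruct HN as [N HN].
      assert (E1 : V - INR n * delta <= ssum n (fun k => a (g k) * (w k - g k))).
      { unfold V. rewrite <- ssum_const, <- ssum_minus.
        apply ssum_le. intros k Hk. specialize (Hg k Hk).
        destruct (H01 (g k)) as [E|E]; rewrite E; unfold w; unmm; lra. }
      assert (E2 : ssum n (fun k => a (g k) * (w k - g k)) <=
                   ssum n (fun k => a (g k) * ssum N (fun m => clip (g k) (w k) (an m) (cn m)))).
      { apply ssum_le. intros k Hk. destruct (H01 (g k)) as [E|E]; rewrite E. lra.
        apply Rmult_le_compat_l. lra. apply finite_cover. apply HN; auto. }
      assert (E3 : ssum n (fun k => a (g k) * ssum N (fun m => clip (g k) (w k) (an m) (cn m)))
                   <= ssum N (fun m => cn m - an m)).
      { replace (ssum n (fun k => a (g k) * ssum N (fun m => clip (g k) (w k) (an m) (cn m))))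
          with (ssum n (fun k => ssum N (fun m => a (g k) * clip (g k) (w k) (an m) (cn m)))).
        2:{ apply ssum_ext; intros; rewrite ssum_scal; auto. }
        rewrite ssum_swap. apply ssum_le. intros m Hm.
        eapply Rle_trans. apply (cells_clip g w (fun k => a (g k)) (an m) (cn m) n).
        intros k Hk; specialize (Hg k Hk); unfold w; unmm; lra.
        intros k Hk; destruct (H01 (g k)) as [E|E]; rewrite E; lra.
        specialize (Hac m). unmm; lra. }
      assert (E4 : ssum N (fun m => cn m - an m) <= s).
      { apply sum_le_limit; auto. intro k; specialize (Hac k); lra. }
      lra. }
    destruct (Rle_dec V s). auto.
    pose proof (pos_INR n) as Hn.
    specialize (Hd ((V - s) / (2 * (INR n + 1)))).
    assert (INR n * ((V - s) / (2 * (INR n + 1))) <= (V - s)/2).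
    { apply Rle_trans with ((INR n + 1) * ((V - s) / (2 * (INR n + 1)))).
      apply Rmult_le_compat_r. apply Rlt_le, Rdiv_lt_0_compat; lra. lra. right; field; lra. }
    assert (0 < (V - s) / (2 * (INR n + 1))) by (apply Rdiv_lt_0_compat; lra).
    specialize (Hd H0). lra.
  -
    intros m' Hm'.
    assert (Hd : forall eps, 0 < eps -> m' <= V + eps).
    { intros eps He. set (e' := eps / (INR n + 1)).
      assert (He' : 0 < e') by (unfold e'; apply Rdiv_lt_0_compat; [lra|]; pose proof (pos_INR n); lra).
      set (an := fun k => if Nat.ltb k n then g k - a (g k) * e' else 0).
      set (cn := fun k => if Nat.ltb k n then g k + a (g k) * (g (S k) - g k) else 0).
      set (h := fun k => cn k - an k).
      assert (Hs : m' <= ssum n h).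
      { apply Hm'. exists an, cn. split; [|split].
        - intro k. unfold an, cn. destruct (Nat.ltb_spec k n). specialize (Hg k H).
          destruct (H01 (g k)) as [E|E]; rewrite E; lra. lra.
        - intros x Hx. destruct (Hsupp x Hx) as [Hx1 Hx2].
          destruct (in_cell g n Hg x (conj Hx1 Hx2)) as [k [Hk Hk2]]. exists k.
          unfold an, cn. destruct (Nat.ltb_spec k n); [|lia].
          assert (a (g k) = 1). { rewrite <- (Hcell k x Hk Hk2). apply HA; auto. }
          rewrite H0. lra.
        - apply sum_eventually. intros k Hk. unfold h, an, cn. destruct (Nat.ltb_spec k n). lia. lra. }
      assert (Hs2 : ssum n h = V + e' * ssum n (fun k => a (g k))).
      { unfold V. rewrite <- ssum_scal, <- ssum_plus. apply ssum_ext. intros k Hk.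
        unfold h, an, cn. destruct (Nat.ltb_spec k n); [|lia]. ring. }
      assert (Hs3 : ssum n (fun k => a (g k)) <= INR n).
      { rewrite <- (Rmult_1_r (INR n)), <- ssum_const. apply ssum_le. intros k _.
        destruct (H01 (g k)) as [E|E]; rewrite E; lra. }
      assert (e' * INR n <= eps).
      { pose proof (pos_INR n). apply Rle_trans with (e' * (INR n + 1)).
        apply Rmult_le_compat_l; lra. unfold e'; right; field; lra. }
      assert (0 <= ssum n (fun k => a (g k))).
      { apply ssum_nonneg. intros k _. destruct (H01 (g k)) as [E|E]; rewrite E; lra. }
      nra. }
    destruct (Rle_dec m' V). auto.
    specialize (Hd ((m' - V)/2)). lra.
Qed.

Definition strict_grid (g : nat -> R) n := forall k, (k < n)%nat -> g k < g (S k).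

Lemma grid_le_iff g n : strict_grid g n -> forall i j, (i <= n)%nat -> (j <= n)%nat ->
  (g i <= g j <-> (i <= j)%nat).
Proof.
  intros Hg i j Hi Hj. split; intro H.
  - destruct (le_lt_dec i j). auto. assert (g j < g i) by (apply (grid_mono g n); auto; lia). lra.
  - destruct (Nat.eq_dec i j). subst; lra. left; apply (grid_mono g n); auto; lia.
Qed.

Lemma grid_lt_iff g n : strict_grid g n -> forall i j, (i <= n)%nat -> (j <= n)%nat ->
  (g i < g j <-> (i < j)%nat).
Proof.
  intros Hg i j Hi Hj. split; intro H.
  - destruct (le_lt_dec j i). apply (grid_le_iff g n Hg j i) in l; auto. lra. auto.
  - apply (grid_mono g n); auto; lia.
Qed.

Lemma grid_pos g n p : strict_grid g n -> (forall k, (k <= n)%nat -> g k <> p) ->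
  exists pos, (pos <= S n)%nat /\ forall k, (k <= n)%nat -> ((k < pos)%nat -> g k < p) /\ ((pos <= k)%nat -> p < g k).
Proof.
  intros Hg Hne.
  destruct (Rlt_dec p (g O)).
  - exists O. split. lia. intros k Hk. split. lia. intros _.
    destruct (Nat.eq_dec k O). subst; auto. pose proof (grid_mono g n Hg O k ltac:(lia)). lra.
  - destruct (Rlt_dec p (g n)).
    + destruct (in_cell g n Hg p) as [k [Hk Hk2]]. lra.
      assert (g k <> p) by (apply Hne; lia).
      exists (S k). split. lia. intros j Hj. split; intro Hjk.
      * destruct (Nat.eq_dec j k). subst; lra. pose proof (grid_mono g n Hg j k ltac:(lia)); lra.
      * destruct (Nat.eq_dec j (S k)). subst; lra. pose proof (grid_mono g n Hg (S k) j ltac:(lia)); lra.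
    + exists (S n). split. lia. intros k Hk. split. intros _.
      destruct (Nat.eq_dec k n). subst. specialize (Hne n (le_n n)); lra.
      pose proof (grid_mono g n Hg k n ltac:(lia)). specialize (Hne n (le_n n)); lra. lia.
Qed.

Lemma grid_exists (P : list R) : exists n g, strict_grid g n /\
  forall p, In p P -> exists k, (k <= n)%nat /\ g k = p.
Proof.
  induction P as [|p P [n [g [Hg Hc]]]].
  - exists O, (fun _ => 0). split. intros k Hk; lia. intros p [].
  - destruct (classic (exists k, (k <= n)%nat /\ g k = p)) as [Hex|Hnex].
    + exists n, g. split; auto. intros p0 [<-|Hin]; auto.
    + destruct (grid_pos g n p Hg) as [pos [Hpos Hp]].
      { intros k Hk E; apply Hnex; eauto. }
      exists (S n), (fun k => if Nat.ltb k pos then g k else if Nat.eqb k pos then p else g (k - 1)%nat).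
      split.
      * intros k Hk. destruct (Nat.ltb_spec k pos); destruct (Nat.ltb_spec (S k) pos).
        -- apply Hg; lia.
        -- destruct (Nat.eqb_spec (S k) pos); [|lia]. apply Hp; lia.
        -- lia.
        -- destruct (Nat.eqb_spec k pos); destruct (Nat.eqb_spec (S k) pos); try lia.
           ++ subst. replace (S pos - 1)%nat with pos by lia. apply Hp; lia.
           ++ replace (S k - 1)%nat with (S (k - 1))%nat by lia. apply Hg; lia.
      * intros p0 [<-|Hin].
        -- exists pos. split. lia. rewrite (proj2 (Nat.ltb_ge pos pos) (le_n _)), Nat.eqb_refl. auto.
        -- destruct (Hc p0 Hin) as [k [Hk <-]].
           destruct (Nat.ltb_spec k pos).
           ++ exists k. split. lia. rewrite (proj2 (Nat.ltb_lt k pos) H). auto.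
           ++ exists (S k). split. lia. destruct (Nat.ltb_spec (S k) pos); [lia|].
              destruct (Nat.eqb_spec (S k) pos); [lia|]. f_equal; lia.
Qed.

Definition Iv (s e x : R) : R := if Rle_dec s x then if Rlt_dec x e then 1 else 0 else 0.
Definition Ige (s x : R) : R := if Rle_dec s x then 1 else 0.

Definition Phi (g : nat -> R) (n : nat) (G F : R -> R) : R :=
  ssum n (fun k => F (g k) * (G (g (S k)) - G (g k))).

Lemma Phi_ext g n G F1 F2 : (forall k, (k < n)%nat -> F1 (g k) = F2 (g k)) ->
  Phi g n G F1 = Phi g n G F2.
Proof. intros H; unfold Phi; apply ssum_ext; intros; rewrite H; auto. Qed.

Lemma Phi_plus g n G F1 F2 : Phi g n G (fun x => F1 x + F2 x) = Phi g n G F1 + Phi g n G F2.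
Proof. unfold Phi. rewrite <- ssum_plus. apply ssum_ext; intros; ring. Qed.

Lemma Phi_scal g n G c F : Phi g n G (fun x => c * F x) = c * Phi g n G F.
Proof. unfold Phi. rewrite <- ssum_scal. apply ssum_ext; intros; ring. Qed.

Lemma Phi_rsum g n G m (F : nat -> R -> R) :
  Phi g n G (fun x => rsum m (fun i => F i x)) = rsum m (fun i => Phi g n G (F i)).
Proof.
  induction m; simpl. unfold Phi. rewrite (ssum_ext n _ (fun _ => 0)). rewrite ssum_const; ring.
  intros; ring.
  rewrite Phi_plus, IHm. auto.
Qed.

Lemma ssum_window n : forall ia ic D, (ia <= ic <= n)%nat ->
  ssum n (fun k => if andb (Nat.leb ia k) (Nat.ltb k ic) then D k else 0) = ssum ic D - ssum ia D.
Proof.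
  induction n; intros ia ic D H.
  - assert (ia = O) by lia; assert (ic = O) by lia; subst; simpl; lra.
  - destruct (Nat.eq_dec ic (S n)).
    + subst. simpl. destruct (Nat.eq_dec ia (S n)).
      * subst. rewrite (ssum_ext n _ (fun _ => 0)). rewrite ssum_const.
        rewrite (proj2 (Nat.leb_gt (S n) n)) by lia. simpl. ring.
        intros k Hk. rewrite (proj2 (Nat.leb_gt (S n) k)) by lia. auto.
      * rewrite (ssum_ext n _ (fun k => if andb (Nat.leb ia k) (Nat.ltb k n) then D k else 0)).
        rewrite IHn by lia. rewrite (proj2 (Nat.leb_le ia n)) by lia.
        rewrite (proj2 (Nat.ltb_lt n (S n))) by lia. simpl.
        destruct (Nat.eq_dec ia n). subst. simpl. ring. simpl. ring.
        intros k Hk. rewrite (proj2 (Nat.ltb_lt k (S n))) by lia. rewrite (proj2 (Nat.ltb_lt k n)) by lia. auto.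
    + simpl. rewrite IHn by lia. rewrite (proj2 (Nat.ltb_ge n ic)) by lia.
      rewrite Bool.andb_false_r. ring.
Qed.

Lemma ssum_telescope (h : nat -> R) m : ssum m (fun k => h (S k) - h k) = h m - h O.
Proof. induction m; simpl. ring. rewrite IHm; ring. Qed.

Lemma Phi_Iv g n G ia ic : strict_grid g n -> (ia <= ic <= n)%nat ->
  Phi g n G (Iv (g ia) (g ic)) = G (g ic) - G (g ia).
Proof.
  intros Hg H. unfold Phi.
  rewrite (ssum_ext n _ (fun k => if andb (Nat.leb ia k) (Nat.ltb k ic) then (G (g (S k)) - G (g k)) else 0)).
  rewrite ssum_window by lia. rewrite !(ssum_telescope (fun k => G (g k))). ring.
  intros k Hk. unfold Iv.
  destruct (Rle_dec (g ia) (g k)) as [E1|E1]; destruct (Nat.leb_spec ia k);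
   try (apply (grid_le_iff g n Hg) in E1; lia); try (exfalso; apply E1, (grid_le_iff g n Hg); lia).
  destruct (Rlt_dec (g k) (g ic)) as [E2|E2]; destruct (Nat.ltb_spec k ic); simpl;
   try (apply (grid_lt_iff g n Hg) in E2; lia); try (exfalso; apply E2, (grid_lt_iff g n Hg); lia); ring.
  simpl; ring.
Qed.

Lemma Phi_Ige g n G ia : strict_grid g n -> (ia <= n)%nat ->
  Phi g n G (Ige (g ia)) = G (g n) - G (g ia).
Proof.
  intros Hg H. rewrite <- (Phi_Iv g n G ia n Hg) by lia. apply Phi_ext. intros k Hk.
  unfold Ige, Iv. destruct Rle_dec; auto. destruct Rlt_dec; auto.
  exfalso. apply n0, (grid_lt_iff g n Hg); try lia.
Qed.

Definition pieces (bb : R) (f : R -> ER) (q : R) (m : nat) (t c : nat -> R) : Prop :=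
  t O = q /\ strict_grid t m /\
  (forall x, x < q -> f x = None) /\
  (forall k x, (k < m)%nat -> t k <= x < t (S k) -> f x = Some (bb * x + c k)) /\
  (forall x, t m <= x -> f x = Some (bb * x + c m)).

Lemma rc_value (bb : R) (f : R -> ER) (t v cc e0 : R) : 0 < bb -> right_cont f -> f t = Some v -> 0 < e0 ->
  (forall x, t < x < t + e0 -> f x = Some (bb * x + cc)) -> v = bb * t + cc.
Proof.
  intros Hb Hrc Hv He0 Hx. destruct (Req_dec v (bb * t + cc)) as [E|E]; auto. exfalso.
  set (eps := Rabs (v - (bb * t + cc)) / 2).
  assert (Heps : 0 < eps) by (unfold eps; apply Rdiv_lt_0_compat; [apply Rabs_pos_lt; lra|lra]).
  specialize (Hrc t). rewrite Hv in Hrc. destruct (Hrc eps Heps) as [delta [Hd Hy]].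
  set (h := Rmin delta (Rmin e0 (eps / bb)) / 2).
  assert (Hep : 0 < eps / bb) by (apply Rdiv_lt_0_compat; lra).
  assert (Hh : 0 < h) by (unfold h; unfold Rmin; repeat destruct Rle_dec; lra).
  assert (Hh1 : h < delta) by (unfold h; unfold Rmin; repeat destruct Rle_dec; lra).
  assert (Hh2 : h < e0) by (unfold h; unfold Rmin; repeat destruct Rle_dec; lra).
  assert (Hh3 : bb * h <= eps / 2).
  { assert (h <= eps / bb / 2) by (unfold h; unfold Rmin; repeat destruct Rle_dec; lra).
    apply Rle_trans with (bb * (eps / bb / 2)). apply Rmult_le_compat_l; lra. right; field; lra. }
  destruct (Hy (t + h)) as [w [Hw1 Hw2]]. lra.
  rewrite Hx in Hw1 by lra. injection Hw1; intro; subst w.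
  apply Rabs_def2 in Hw2. rewrite Rmult_plus_distr_l in Hw2. clearbody h. clear Hrc Hy.
  assert (Ea : Rabs (v - (bb * t + cc)) = 2 * eps) by (unfold eps; field).
  destruct (Rle_dec 0 (v - (bb * t + cc))).
  rewrite Rabs_right in Ea by lra. clearbody eps. lra. rewrite Rabs_left in Ea by lra. clearbody eps. assert (0 < bb * h) by (apply Rmult_lt_0_compat; lra). lra.
Qed.

Lemma get_pieces (bn : nat) (f : R -> ER) (q : R) : (1 <= bn)%nat -> cond3 bn f q -> right_cont f ->
  exists m t c, pieces (INR bn) f q m t c /\ c m = - q.
Proof.
  intros Hbn [Hdom [[m [t [c [Ht0 [Hst [Hin Hlast]]]]]] [T HT]]] Hrc.
  assert (Hb : 0 < INR bn) by (apply lt_0_INR; lia).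
  assert (Htq : forall k, (k <= m)%nat -> q <= t k).
  { intros k Hk. rewrite <- Ht0. destruct k. lra. left; apply (grid_mono t m Hst); lia. }
  assert (Hval : forall k, (k <= m)%nat -> f (t k) = Some (INR bn * t k + c k)).
  { intros k Hk. destruct (f (t k)) as [v|] eqn:E.
    - f_equal. apply (rc_value (INR bn) f (t k) v (c k) (if Nat.ltb k m then t (S k) - t k else 1)); auto.
      destruct (Nat.ltb_spec k m). specialize (Hst k H); lra. lra.
      intros x Hx. destruct (Nat.ltb_spec k m). apply Hin; auto; lra.
      assert (k = m) by lia. subst. apply Hlast; lra.
    - exfalso. apply (proj2 (Hdom (t k))); auto. }
  exists m, t, c. split; [split; [auto|split; [auto|split; [|split]]]|].
  - intros x Hx. destruct (f x) eqn:E; auto. exfalso. assert (q <= x) by (apply Hdom; congruence). lra.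
  - intros k x Hk Hx. destruct (Req_dec x (t k)). subst; apply Hval; lia. apply Hin; auto; lra.
  - intros x Hx. destruct (Req_dec x (t m)). subst; apply Hval; lia. apply Hlast; lra.
  - set (x := Rmax T (t m + 1)). assert (T <= x /\ t m < x) by (unfold x, Rmax; destruct Rle_dec; lra).
    specialize (HT x (proj1 H)). rewrite Hlast in HT by lra. injection HT; intro. lra.
Qed.

Section Pc.
Variable bb : R.
Variable f : R -> ER.
Variable q : R.
Variable m : nat.
Variables t c : nat -> R.
Hypothesis Hb : 0 < bb.
Hypothesis Hp : pieces bb f q m t c.
Hypothesis Hsi : strictly_incr f.

Definition ps k := bb * t k + c k.
Definition pe k := bb * t (S k) + c k.

Lemma f_inj x y mu : f x = Some mu -> f y = Some mu -> x = y.
Proof.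
  intros Hx Hy. destruct (Rtotal_order x y) as [H|[H|H]]; auto; exfalso.
  pose proof (proj2 Hsi x y H) as E. rewrite Hx, Hy in E. specialize (E ltac:(discriminate) ltac:(discriminate)); simpl in E; lra.
  pose proof (proj2 Hsi y x H) as E. rewrite Hx, Hy in E. specialize (E ltac:(discriminate) ltac:(discriminate)); simpl in E; lra.
Qed.

Lemma pe_le_ps k : (k < m)%nat -> ps k < pe k <= ps (S k).
Proof.
  destruct Hp as [Ht0 [Hst [Hnone [Hin Hlast]]]]. intros Hk. pose proof (Hst k Hk). unfold ps, pe. split.
  apply Rplus_lt_compat_r, Rmult_lt_compat_l; lra.
  destruct (Rle_dec (bb * t (S k) + c k) (bb * t (S k) + c (S k))) as [E|E]; auto. exfalso.
  assert (Hf1 : f (t (S k)) = Some (bb * t (S k) + c (S k))).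
  { destruct (Nat.eq_dec (S k) m). subst. apply Hlast; lra. apply Hin; [lia|]. pose proof (Hst (S k) ltac:(lia)). lra. }
  set (h := Rmin ((t (S k) - t k)/2) (((bb * t (S k) + c k) - (bb * t (S k) + c (S k))) / (2 * bb))).
  assert (0 < h) by (unfold h, Rmin; destruct Rle_dec; [lra|apply Rdiv_lt_0_compat; lra]).
  assert (h <= (t (S k) - t k)/2) by (unfold h, Rmin; destruct Rle_dec; lra).
  assert (Hh : bb * h <= ((bb * t (S k) + c k) - (bb * t (S k) + c (S k))) / 2).
  { assert (h <= ((bb * t (S k) + c k) - (bb * t (S k) + c (S k))) / (2 * bb)) by (unfold h, Rmin; destruct Rle_dec; lra).
    apply Rle_trans with (bb * (((bb * t (S k) + c k) - (bb * t (S k) + c (S k))) / (2 * bb))).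
    apply Rmult_le_compat_l; lra. right; field; lra. }
  pose proof (proj1 Hsi (t (S k) - h) (t (S k)) ltac:(lra)) as E2.
  rewrite Hf1, (Hin k) in E2 by (auto; lra). simpl in E2. nra.
Qed.

Definition Fimg (mu : R) := ssum m (fun k => Iv (ps k) (pe k) mu) + Ige (ps m) mu.

Lemma chain_sum mu : forall m', (m' <= m)%nat ->
  ssum m' (fun k => Iv (ps k) (pe k) mu) = 0 \/ (ssum m' (fun k => Iv (ps k) (pe k) mu) = 1 /\ mu < ps m').
Proof.
  induction m'; intros Hm. left; reflexivity.
  simpl. pose proof (pe_le_ps m' ltac:(lia)).
  destruct (IHm' ltac:(lia)) as [E|[E1 E2]]; rewrite ?E, ?E1; unfold Iv;
   destruct Rle_dec; try destruct Rlt_dec; try (left; ring); try (right; split; [ring|lra]); lra.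
Qed.

Lemma ssum_pos_zero n' (h : nat -> R) : (forall k, (k < n')%nat -> 0 <= h k) -> ssum n' h = 0 ->
  forall k, (k < n')%nat -> h k = 0.
Proof.
  induction n'; intros H0 Hs k Hk. lia. simpl in Hs.
  assert (0 <= ssum n' h) by (apply ssum_nonneg; intros; apply H0; lia).
  assert (0 <= h n') by (apply H0; lia).
  destruct (Nat.eq_dec k n'). subst; lra. apply IHn'; [intros; apply H0; lia | lra | lia].
Qed.

Lemma Iv01 s e x : Iv s e x = 0 \/ Iv s e x = 1.
Proof. unfold Iv; destruct Rle_dec; try destruct Rlt_dec; auto. Qed.
Lemma Ige01 s x : Ige s x = 0 \/ Ige s x = 1.
Proof. unfold Ige; destruct Rle_dec; auto. Qed.

Lemma Fimg01 mu : Fimg mu = 0 \/ Fimg mu = 1.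
Proof.
  unfold Fimg. destruct (chain_sum mu m (le_n m)) as [E|[E1 E2]]; rewrite ?E, ?E1; unfold Ige; destruct Rle_dec; 
  try (left; ring); try (right; ring); lra.
Qed.

Lemma Fimg_iff mu : Fimg mu = 1 <-> exists x, f x = Some mu.
Proof.
  destruct Hp as [Ht0 [Hst [Hnone [Hin Hlast]]]].
  split.
  - intros H. unfold Fimg in H. destruct (Rle_dec (ps m) mu).
    + exists ((mu - c m) / bb). rewrite Hlast. f_equal; field; lra.
      unfold ps in r. apply Rmult_le_reg_l with bb; auto. replace (bb * ((mu - c m) / bb)) with (mu - c m) by (field; lra). lra.
    + unfold Ige in H. destruct Rle_dec; [contradiction|]. rewrite Rplus_0_r in H.
      destruct (classic (forall k, (k < m)%nat -> Iv (ps k) (pe k) mu = 0)) as [Hall|Hex].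
      * rewrite (ssum_ext m _ (fun _ => 0)) in H by auto. rewrite ssum_const in H. lra.
      * apply not_all_ex_not in Hex. destruct Hex as [k Hk]. apply imply_to_and in Hk. destruct Hk as [Hk Hiv].
        unfold Iv in Hiv. destruct Rle_dec as [E1|]; [|lra]. destruct Rlt_dec as [E2|]; [|lra].
        exists ((mu - c k) / bb). rewrite (Hin k). f_equal; field; lra. auto. unfold ps, pe in *.
        replace ((mu - c k) / bb) with (mu / bb - c k / bb) by (field; lra).
        split; [apply Rmult_le_reg_l with bb|apply Rmult_lt_reg_l with bb]; auto;
        replace (bb * (mu / bb - c k / bb)) with (mu - c k) by (field; lra); lra.
  - intros [x Hx]. destruct (Rlt_dec x q). rewrite Hnone in Hx; auto; discriminate.
    destruct (Rle_dec (t m) x).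
    + rewrite Hlast in Hx by auto. injection Hx; intro; subst mu.
      unfold Fimg. destruct (chain_sum (bb * x + c m) m (le_n m)) as [E|[E1 E2]].
      rewrite E. unfold Ige, ps. destruct Rle_dec. ring. exfalso; apply n0.
      apply Rplus_le_compat_r, Rmult_le_compat_l; lra.
      exfalso. unfold ps in E2. assert (bb * t m <= bb * x) by (apply Rmult_le_compat_l; lra). lra.
    + destruct (in_cell t m Hst x) as [k [Hk Hk2]]. rewrite Ht0; lra.
      rewrite (Hin k) in Hx by auto. injection Hx; intro; subst mu.
      assert (Hiv : Iv (ps k) (pe k) (bb * x + c k) = 1).
      { unfold Iv, ps, pe. destruct Rle_dec as [|E]. destruct Rlt_dec as [|E]. auto.
        exfalso; apply E. apply Rplus_lt_compat_r, Rmult_lt_compat_l; lra.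
        exfalso; apply E. apply Rplus_le_compat_r, Rmult_le_compat_l; lra. }
      destruct (Fimg01 (bb * x + c k)) as [E|E]; auto. exfalso.
      unfold Fimg in E. assert (0 <= Ige (ps m) (bb * x + c k)) by (destruct (Ige01 (ps m) (bb * x + c k)); lra).
      assert (ssum m (fun k0 => Iv (ps k0) (pe k0) (bb * x + c k)) = 0).
      { assert (0 <= ssum m (fun k0 => Iv (ps k0) (pe k0) (bb * x + c k))).
        apply ssum_nonneg; intros; destruct (Iv01 (ps k0) (pe k0) (bb * x + c k)); lra. lra. }
      assert (Hnn : forall k0, (k0 < m)%nat -> 0 <= Iv (ps k0) (pe k0) (bb * x + c k))
        by (intros k0 _; destruct (Iv01 (ps k0) (pe k0) (bb * x + c k)); lra).
      pose proof (ssum_pos_zero m _ Hnn H0 k Hk). simpl in H1. lra.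
Qed.

End Pc.

Lemma rsum_ext n f g : (forall i, (1 <= i <= n)%nat -> f i = g i) -> rsum n f = rsum n g.
Proof. induction n; simpl; intros; auto. rewrite IHn, (H (S n)); auto; try lia. intros; apply H; lia. Qed.
Lemma rsum_plus n f g : rsum n (fun i => f i + g i) = rsum n f + rsum n g.
Proof. induction n; simpl; lra. Qed.
Lemma rsum_scal n c f : rsum n (fun i => c * f i) = c * rsum n f.
Proof. induction n; simpl. ring. rewrite IHn; ring. Qed.
Lemma rsum_const n c : rsum n (fun _ => c) = INR n * c.
Proof. induction n; cbn [rsum]. simpl; ring. rewrite IHn, S_INR; ring. Qed.
Lemma rsum_id n : rsum n (fun i => INR i) = INR n * (INR n + 1) / 2.
Proof. induction n; cbn [rsum]. simpl; lra. rewrite IHn, S_INR; field. Qed.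
Lemma rsum_nonneg_zero n f : (forall i, (1 <= i <= n)%nat -> 0 <= f i) -> rsum n f = 0 ->
  forall i, (1 <= i <= n)%nat -> f i = 0.
Proof.
  induction n; intros H0 Hs i Hi. lia. simpl in Hs.
  assert (0 <= rsum n f). { clear IHn Hs Hi. induction n; simpl. lra.
    assert (0 <= f (S n)) by (apply H0; lia). assert (0 <= rsum n f) by (apply IHn; intros; apply H0; lia). lra. }
  assert (0 <= f (S n)) by (apply H0; lia).
  destruct (Nat.eq_dec i (S n)). subst; lra. apply IHn; [intros; apply H0; lia | lra | lia].
Qed.

Lemma count_INR n p : INR (count_idx n p) = rsum n (fun i => if p i then 1 else 0).
Proof. induction n; simpl. auto. rewrite plus_INR, IHn. destruct (p (S n)); simpl; ring. Qed.

Lemma count_ext n p1 p2 : (forall i, (1 <= i <= n)%nat -> p1 i = p2 i) -> count_idx n p1 = count_idx n p2.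
Proof. induction n; simpl; intros; auto. rewrite IHn, (H (S n)); auto; try lia. intros; apply H; lia. Qed.

Lemma count_pos n p : (count_idx n p >= 1)%nat -> exists i, (1 <= i <= n)%nat /\ p i = true.
Proof. induction n; simpl; intros. lia. destruct (p (S n)) eqn:E. exists (S n); split; auto; lia.
  destruct IHn as [i [Hi Hp]]. lia. exists i; split; auto; lia. Qed.

Lemma count_ge1 n p j : (1 <= j <= n)%nat -> p j = true -> (count_idx n p >= 1)%nat.
Proof. induction n; simpl; intros. lia. destruct (Nat.eq_dec j (S n)). subst. rewrite H0. lia.
  assert (count_idx n p >= 1)%nat by (apply IHn; auto; lia). lia. Qed.

Definition mono (p : nat -> bool) (d : nat) := forall j, (1 <= j < d)%nat -> p j = true -> p (S j) = true.

Lemma mono_chain p D : mono p D -> forall j, (1 <= j <= D)%nat -> p j = true -> p D = true.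
Proof.
  intros Hm j Hj Hp. induction D. lia. destruct (Nat.eq_dec j (S D)). subst; auto.
  apply Hm. lia. apply IHD. intros k Hk; apply Hm; lia. lia.
Qed.

Lemma count_zero n p : (forall j, (1 <= j <= n)%nat -> p j = false) -> count_idx n p = O.
Proof. induction n; simpl; intros; auto. rewrite H, IHn; auto; intros; try apply H; lia. Qed.

Lemma mono_count d : forall p, mono p d -> forall j, (1 <= j <= d)%nat ->
  (p j = true <-> (d + 1 <= j + count_idx d p)%nat).
Proof.
  induction d; intros p Hm j Hj. lia. simpl.
  destruct (p (S d)) eqn:E.
  - destruct (Nat.eq_dec j (S d)). subst. rewrite E; split; auto; lia.
    rewrite (IHd p) by (try (intros k Hk; apply Hm; lia); lia). lia.
  - assert (Hall : forall k, (1 <= k <= S d)%nat -> p k = false).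
    { intros k Hk. destruct (p k) eqn:E2; auto. rewrite (mono_chain p (S d) Hm k Hk E2) in E. auto. }
    rewrite count_zero by (intros; apply Hall; lia). rewrite Hall by lia. split; intro; [discriminate|lia].
Qed.

Lemma mono_sum d : forall p, mono p d ->
  rsum d (fun j => INR j * (if p j then 1 else 0)) =
  INR (count_idx d p) * INR d - INR (count_idx d p) * (INR (count_idx d p) - 1) / 2.
Proof.
  induction d; intros p Hm. simpl; lra. cbn [rsum count_idx].
  destruct (p (S d)) eqn:E.
  - rewrite IHd by (intros k Hk; apply Hm; lia). rewrite plus_INR, !S_INR. change (INR 1) with 1. change (INR 0) with 0. field.
  - assert (Hall : forall k, (1 <= k <= S d)%nat -> p k = false).
    { intros k Hk. destruct (p k) eqn:E2; auto. rewrite (mono_chain p (S d) Hm k Hk E2) in E. auto. }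
    rewrite count_zero by (intros; apply Hall; lia).
    rewrite (rsum_ext d _ (fun _ => 0)). rewrite rsum_const. simpl. field.
    intros i Hi. rewrite Hall by lia. ring.
Qed.

Lemma pair_sum d (f : nat -> R) : (forall i, (1 <= i <= d)%nat -> f i = 0 \/ f i = 1) ->
  rsum d (fun i' => f i' * rsum (i' - 1) (fun i => f i)) = rsum d f * (rsum d f - 1) / 2.
Proof.
  intros H01. induction d. simpl; lra. cbn [rsum]. rewrite IHd by (intros; apply H01; lia). replace (S d - 1)%nat with d by lia.
  change (rsum d (fun i => f i)) with (rsum d f). destruct (H01 (S d) ltac:(lia)) as [E|E]; rewrite E; field.
Qed.

Fixpoint nsum (n : nat) (h : nat -> nat) : nat := match n with O => O | S m => (nsum m h + h (S m))%nat end.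
Fixpoint lsum (L : list R) (h : R -> nat) : nat := match L with nil => O | q :: L' => (h q + lsum L' h)%nat end.

Lemma count_nsum n p : count_idx n p = nsum n (fun i => if p i then 1%nat else 0%nat).
Proof. induction n; simpl; auto. Qed.

Lemma nsum_plus n f g : nsum n (fun i => f i + g i)%nat = (nsum n f + nsum n g)%nat.
Proof. induction n; simpl; lia. Qed.

Lemma nsum_ext n f g : (forall i, (1 <= i <= n)%nat -> f i = g i) -> nsum n f = nsum n g.
Proof. induction n; simpl; intros; auto. rewrite IHn, (H (S n)); auto; try lia. intros; apply H; lia. Qed.

Lemma lsum_ext L f g : (forall q, In q L -> f q = g q) -> lsum L f = lsum L g.
Proof. induction L; simpl; intros. auto. rewrite (H a (or_introl eq_refl)), IHL; auto. Qed.

Lemma swap_nl n L (h : nat -> R -> nat) :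
  lsum L (fun q => nsum n (fun i => h i q)) = nsum n (fun i => lsum L (fun q => h i q)).
Proof. induction L; simpl. induction n; simpl; lia. rewrite IHL, <- nsum_plus. auto. Qed.

Lemma lsum_unique L (P : R -> Prop) (Pb : R -> bool) : NoDup L ->
  (forall q, Pb q = true <-> P q) -> (forall q q', P q -> P q' -> q = q') -> (forall q, P q -> In q L) ->
  lsum L (fun q => if Pb q then 1%nat else 0%nat) = (if excluded_middle_informative (exists q, P q) then 1%nat else 0%nat).
Proof.
  intros Hnd HP Hu Hin. destruct excluded_middle_informative as [Hex|Hn]. destruct Hex as [q0 Hq0].
  - assert (Hi := Hin q0 Hq0). clear Hin. induction L as [|a L IH]. destruct Hi.
    inversion Hnd; subst. simpl. destruct Hi as [->|Hi].
    + assert (Pb q0 = true) by (apply HP; auto). rewrite H.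
      rewrite (lsum_ext L _ (fun _ => O)). clear. induction L; simpl; auto.
      intros q Hq. destruct (Pb q) eqn:E; auto. apply HP in E. rewrite (Hu q q0 E Hq0) in Hq. contradiction.
    + rewrite IH; auto. destruct (Pb a) eqn:E; auto. apply HP in E. rewrite (Hu a q0 E Hq0) in H1. contradiction.
  - rewrite (lsum_ext L _ (fun _ => O)). clear. induction L; simpl; auto.
    intros q _. destruct (Pb q) eqn:E; auto. exfalso; apply Hn; exists q; apply HP; auto.
Qed.

Lemma list_of_family (P : nat -> R -> Prop) d :
  (forall i q q', P i q -> P i q' -> q = q') -> exists L, NoDup L /\
  forall q, In q L <-> exists i, (1 <= i <= d)%nat /\ P i q.
Proof.
  intros Hu. induction d.
  - exists nil. split. constructor. intros q; split; [intros []|intros [i [Hi _]]; lia].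
  - destruct IHd as [L [Hnd HL]].
    destruct (classic (exists q, P (S d) q)) as [[q0 Hq0]|Hn].
    + destruct (classic (In q0 L)) as [Hin|Hin].
      * exists L. split; auto. intros q; split.
        -- intros H; apply HL in H; destruct H as [i [Hi Hp]]; exists i; split; auto; lia.
        -- intros [i [Hi Hp]]. destruct (Nat.eq_dec i (S d)). subst. rewrite (Hu _ _ _ Hp Hq0); auto.
           apply HL; exists i; split; auto; lia.
      * exists (q0 :: L). split. constructor; auto. intros q; split.
        -- intros [<-|H]. exists (S d); split; auto; lia. apply HL in H; destruct H as [i [Hi Hp]]; exists i; split; auto; lia.
        -- intros [i [Hi Hp]]. destruct (Nat.eq_dec i (S d)). subst. left; symmetry; apply (Hu _ _ _ Hp Hq0).
           right; apply HL; exists i; split; auto; lia.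
    + exists L. split; auto. intros q; split.
      -- intros H; apply HL in H; destruct H as [i [Hi Hp]]; exists i; split; auto; lia.
      -- intros [i [Hi Hp]]. destruct (Nat.eq_dec i (S d)). subst. exfalso; eauto.
         apply HL; exists i; split; auto; lia.
Qed.

Lemma eqb_ER_spec o c : eqb_ER o (Some c) = true <-> o = Some c.
Proof. destruct o; simpl. destruct Req_EM_T; subst; split; intro; auto; try discriminate. congruence. split; discriminate. Qed.

Definition Gs (x : R) := sin (PI * x) ^ 2.

Lemma Gs_shift_nat x n : Gs (x + INR n) = Gs x.
Proof.
  unfold Gs. induction n. simpl. rewrite Rplus_0_r; auto.
  rewrite S_INR. replace (PI * (x + (INR n + 1))) with (PI * (x + INR n) + PI) by ring.
  rewrite neg_sin. rewrite <- IHn. ring.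
Qed.

Lemma Gs_shift x z : Gs (IZR z + x) = Gs x.
Proof.
  destruct (Z_le_gt_dec 0 z).
  - rewrite <- (Z2Nat.id z) by lia. rewrite <- INR_IZR_INZ, Rplus_comm. apply Gs_shift_nat.
  - replace z with (- Z.of_nat (Z.to_nat (- z)))%Z by lia. rewrite opp_IZR, <- INR_IZR_INZ.
    rewrite <- (Gs_shift_nat (- INR (Z.to_nat (- z)) + x) (Z.to_nat (-z))). f_equal; ring.
Qed.

Lemma Gs_nonneg x : 0 <= Gs x.
Proof. unfold Gs. simpl. rewrite Rmult_1_r. apply Rle_0_sqr. Qed.

Lemma Gs_zero_int x : Gs x = 0 -> exists z, x = IZR z.
Proof.
  unfold Gs; intro H. simpl in H. rewrite Rmult_1_r in H. apply Rsqr_0_uniq in H.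
  destruct (sin_eq_0_0 _ H) as [z Hz]. exists z. pose proof PI_RGT_0.
  apply Rmult_eq_reg_l with PI. rewrite Hz; ring. lra.
Qed.

Lemma Gs0 : Gs 0 = 0.
Proof. unfold Gs. rewrite Rmult_0_r, sin_0. ring. Qed.

Lemma nsum_INR n h : INR (nsum n h) = rsum n (fun i => INR (h i)).
Proof. induction n; simpl nsum; cbn [rsum]. auto. rewrite plus_INR, IHn; auto. Qed.

Fixpoint zsum (n : nat) (f : nat -> Z) : Z := match n with O => 0%Z | S m => (zsum m f + f (S m))%Z end.
Lemma IZR_zsum n f : IZR (zsum n f) = rsum n (fun i => IZR (f i)).
Proof. induction n; simpl zsum; cbn [rsum]. auto. rewrite plus_IZR, IHn; auto. Qed.

Lemma least_nat (P : nat -> Prop) n : P n -> exists K, (K <= n)%nat /\ P K /\ forall k, (k < K)%nat -> ~ P k.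
Proof.
  induction n using (well_founded_induction lt_wf). intros Hn.
  destruct (classic (exists k, (k < n)%nat /\ P k)) as [[k [Hk Pk]]|Hno].
  - destruct (H k Hk Pk) as [K [HK1 [HK2 HK3]]]. exists K; repeat split; auto; lia.
  - exists n; repeat split; auto. intros k Hk Pk; apply Hno; eauto.
Qed.

Lemma not_cont bb f q m t c k : 0 < bb -> pieces bb f q m t c -> (k < m)%nat -> c k <> c (S k) ->
  ~ cont_at f (t (S k)).
Proof.
  intros Hb [Ht0 [Hst [Hnone [Hin Hlast]]]] Hk Hc Hcont.
  pose proof (Hst k Hk) as Htk.
  assert (Hf1 : f (t (S k)) = Some (bb * t (S k) + c (S k))).
  { destruct (Nat.eq_dec (S k) m). subst. apply Hlast; lra. apply Hin; [lia|]. pose proof (Hst (S k) ltac:(lia)). lra. }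
  unfold cont_at in Hcont. rewrite Hf1 in Hcont.
  set (eps := Rabs (c k - c (S k)) / 2).
  assert (Heps : 0 < eps) by (unfold eps; apply Rdiv_lt_0_compat; [apply Rabs_pos_lt; lra|lra]).
  destruct (Hcont eps Heps) as [delta [Hd Hy]].
  assert (Hep : 0 < eps / bb) by (apply Rdiv_lt_0_compat; lra).
  set (h := Rmin delta (Rmin (t (S k) - t k) (eps / bb)) / 2).
  assert (Hh : 0 < h) by (unfold h; unfold Rmin; repeat destruct Rle_dec; lra).
  assert (Hh1 : h < delta) by (unfold h; unfold Rmin; repeat destruct Rle_dec; lra).
  assert (Hh2 : h < t (S k) - t k) by (unfold h; unfold Rmin; repeat destruct Rle_dec; lra).
  assert (Hh3 : bb * h <= eps / 2).
  { assert (h <= eps / bb / 2) by (unfold h; unfold Rmin; repeat destruct Rle_dec; lra).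
    apply Rle_trans with (bb * (eps / bb / 2)). apply Rmult_le_compat_l; lra. right; field; lra. }
  destruct (Hy (t (S k) - h)) as [w [Hw1 Hw2]].
  { replace (t (S k) - h - t (S k)) with (- h) by ring. rewrite Rabs_Ropp, Rabs_right; lra. }
  rewrite (Hin k) in Hw1 by (auto; lra). injection Hw1; intro; subst w.
  apply Rabs_def2 in Hw2. assert (0 < bb * h) by (apply Rmult_lt_0_compat; lra).
  assert (Ea : Rabs (c k - c (S k)) = 2 * eps) by (unfold eps; field).
  clearbody eps h. rewrite Rmult_minus_distr_l in Hw2.
  destruct (Rle_dec 0 (c k - c (S k))).
  rewrite Rabs_right in Ea by lra. lra. rewrite Rabs_left in Ea by lra. lra.
Qed.

Lemma Phi_ssum g n G m (F : nat -> R -> R) :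
  Phi g n G (fun x => ssum m (fun i => F i x)) = ssum m (fun i => Phi g n G (F i)).
Proof.
  induction m; simpl. unfold Phi. rewrite (ssum_ext n _ (fun _ => 0)). rewrite ssum_const; ring.
  intros; ring. rewrite Phi_plus, IHm. auto.
Qed.

Lemma Phi_Fimg g n G bb f q m t c : 0 < bb -> strict_grid g n -> pieces bb f q m t c -> strictly_incr f ->
  (forall k, (k <= m)%nat -> exists j, (j <= n)%nat /\ g j = ps bb t c k) ->
  (forall k, (k < m)%nat -> exists j, (j <= n)%nat /\ g j = pe bb t c k) ->
  Phi g n G (Fimg bb m t c) = ssum m (fun k => G (pe bb t c k) - G (ps bb t c k)) + (G (g n) - G (ps bb t c m)).
Proof.
  intros Hb Hg Hp Hsi Hps Hpe. unfold Fimg. rewrite Phi_plus, Phi_ssum. f_equal.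
  - apply ssum_ext. intros k Hk. destruct (Hps k ltac:(lia)) as [ia [Hia Ea]]. destruct (Hpe k Hk) as [ic [Hic Ec]].
    rewrite <- Ea, <- Ec. apply Phi_Iv; auto. split; auto.
    apply Nat.lt_le_incl. apply (grid_lt_iff g n Hg); auto. rewrite Ea, Ec. apply (pe_le_ps bb f q m t c); auto.
  - destruct (Hps m (le_n m)) as [ia [Hia Ea]]. rewrite <- Ea. apply Phi_Ige; auto.
Qed.

Lemma telescope_pieces m (A B : nat -> R) X :
  ssum m (fun k => A k - B k) + (X - B m) = X - B O + ssum m (fun k => A k - B (S k)).
Proof. induction m; simpl. ring. lra. Qed.

Lemma Fimg_id_total bb q m t c X : t O = q -> c m = - q ->
  ssum m (fun k => pe bb t c k - ps bb t c k) + (X - ps bb t c m) = X - bb * q + q.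
Proof.
  intros Ht0 Hcm. rewrite (telescope_pieces m (pe bb t c) (ps bb t c)).
  rewrite (ssum_ext m _ (fun k => (- c (S k)) - (- c k))).
  rewrite (ssum_telescope (fun k => - c k)). unfold ps. rewrite Ht0, Hcm. ring.
  intros k _. unfold pe, ps. ring.
Qed.

Lemma Fimg_Gs_total bb q m t c X (Q : Z) : t O = q -> c m = - q -> q = IZR Q ->
  (exists z0, bb * q = IZR z0) ->
  (forall k, (k < m)%nat -> c k = c (S k) \/ exists z, bb * t (S k) = IZR z) ->
  ssum m (fun k => Gs (pe bb t c k) - Gs (ps bb t c k)) + (Gs X - Gs (ps bb t c m)) = Gs X - Gs 0.
Proof.
  intros Ht0 Hcm HQ [z0 Hz0] Hdisc. rewrite (telescope_pieces m (fun k => Gs (pe bb t c k)) (fun k => Gs (ps bb t c k))).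
  rewrite (ssum_ext m _ (fun k => (- Gs (c (S k))) - (- Gs (c k)))).
  rewrite (ssum_telescope (fun k => - Gs (c k))). unfold ps. rewrite Ht0, Hz0, Gs_shift, Hcm, HQ.
  rewrite <- opp_IZR, <- (Rplus_0_r (IZR (- Q))), Gs_shift. ring.
  intros k Hk. unfold pe, ps. destruct (Hdisc k Hk) as [E|[z E]].
  rewrite E; ring. rewrite E, !Gs_shift. ring.
Qed.

Lemma cell_cmp g n k x j : strict_grid g n -> (k < n)%nat -> g k <= x < g (S k) -> (j <= n)%nat ->
  (g j <= x <-> g j <= g k) /\ (x < g j <-> g k < g j).
Proof.
  intros Hg Hk Hx Hj. destruct (le_lt_dec j k).
  - assert (g j <= g k) by (apply (grid_le_iff g n Hg); lia). split; split; intro; lra.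
  - assert (g (S k) <= g j) by (apply (grid_le_iff g n Hg); lia).
    assert (g k < g (S k)) by (apply Hg; auto). split; split; intro; lra.
Qed.

Lemma Iv_cell g n k x s e : strict_grid g n -> (k < n)%nat -> g k <= x < g (S k) ->
  (exists j, (j <= n)%nat /\ g j = s) -> (exists j, (j <= n)%nat /\ g j = e) -> Iv s e x = Iv s e (g k).
Proof.
  intros Hg Hk Hx [js [Hjs <-]] [je [Hje <-]].
  destruct (cell_cmp g n k x js Hg Hk Hx Hjs) as [A1 A2]. destruct (cell_cmp g n k x je Hg Hk Hx Hje) as [B1 B2].
  unfold Iv. destruct (Rle_dec (g js) x); destruct (Rle_dec (g js) (g k)); try tauto.
  destruct (Rlt_dec x (g je)); destruct (Rlt_dec (g k) (g je)); tauto.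
Qed.

Lemma Ige_cell g n k x s : strict_grid g n -> (k < n)%nat -> g k <= x < g (S k) ->
  (exists j, (j <= n)%nat /\ g j = s) -> Ige s x = Ige s (g k).
Proof.
  intros Hg Hk Hx [js [Hjs <-]]. destruct (cell_cmp g n k x js Hg Hk Hx Hjs) as [A1 A2].
  unfold Ige. destruct (Rle_dec (g js) x); destruct (Rle_dec (g js) (g k)); tauto.
Qed.

Lemma Fimg_cell g n k x bb m t c : strict_grid g n -> (k < n)%nat -> g k <= x < g (S k) ->
  (forall k, (k <= m)%nat -> exists j, (j <= n)%nat /\ g j = ps bb t c k) ->
  (forall k, (k < m)%nat -> exists j, (j <= n)%nat /\ g j = pe bb t c k) ->
  Fimg bb m t c x = Fimg bb m t c (g k).
Proof.
  intros Hg Hk Hx Hps Hpe. unfold Fimg. f_equal.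
  apply ssum_ext; intros; apply (Iv_cell g n); auto. apply Hps; lia.
  apply (Ige_cell g n); auto.
Qed.

Lemma Fimg_low g n x bb m t c : strict_grid g n -> x < g O ->
  (forall k, (k <= m)%nat -> exists j, (j <= n)%nat /\ g j = ps bb t c k) ->
  Fimg bb m t c x = 0.
Proof.
  intros Hg Hx Hps. unfold Fimg.
  assert (H0 : forall k, (k <= m)%nat -> x < ps bb t c k).
  { intros k Hk. destruct (Hps k Hk) as [j [Hj <-]]. assert (g O <= g j) by (apply (grid_le_iff g n Hg); lia). lra. }
  rewrite (ssum_ext m _ (fun _ => 0)). rewrite ssum_const. unfold Ige. destruct Rle_dec.
  specialize (H0 m (le_n m)). lra. ring.
  intros k Hk. unfold Iv. destruct Rle_dec; auto. specialize (H0 k ltac:(lia)); lra.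
Qed.

Lemma Fimg_high g n x bb m t c : strict_grid g n -> g n <= x ->
  (forall k, (k <= m)%nat -> exists j, (j <= n)%nat /\ g j = ps bb t c k) ->
  (forall k, (k < m)%nat -> exists j, (j <= n)%nat /\ g j = pe bb t c k) ->
  Fimg bb m t c x = 1.
Proof.
  intros Hg Hx Hps Hpe. unfold Fimg.
  rewrite (ssum_ext m _ (fun _ => 0)). rewrite ssum_const. unfold Ige. destruct Rle_dec. ring.
  destruct (Hps m (le_n m)) as [j [Hj E]]. rewrite <- E in n0. assert (g j <= g n) by (apply (grid_le_iff g n Hg); lia). lra.
  intros k Hk. unfold Iv. destruct Rle_dec; auto. destruct Rlt_dec; auto.
  destruct (Hpe k Hk) as [j [Hj E]]. rewrite <- E in r0. assert (g j <= g n) by (apply (grid_le_iff g n Hg); lia). lra.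
Qed.

Lemma si_inj f x y mu : strictly_incr f -> f x = Some mu -> f y = Some mu -> x = y.
Proof.
  intros Hsi Hx Hy. destruct (Rtotal_order x y) as [H|[H|H]]; auto; exfalso.
  pose proof (proj2 Hsi x y H) as E. rewrite Hx, Hy in E. specialize (E ltac:(discriminate) ltac:(discriminate)); simpl in E; lra.
  pose proof (proj2 Hsi y x H) as E. rewrite Hx, Hy in E. specialize (E ltac:(discriminate) ltac:(discriminate)); simpl in E; lra.
Qed.

Lemma ole_refl x : ole x x.
Proof. destruct x; simpl; auto; lra. Qed.
Lemma ole_trans x y z : ole x y -> ole y z -> ole x z.
Proof. destruct x, y, z; simpl; auto; try lra; tauto. Qed.

Record PData := mkPD { pQ : Z; pm : nat; pt : nat -> R; pc : nat -> R }.

Theorem mainTheorem6 (b d : nat) (hb : (2 <= b)%nat) (hd : (1 <= d)%nat)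
  (phi psi : nat -> R -> ER) (hphi : inPhiZ b d phi psi) :
  exists (L : nat -> nat -> R) (M : nat -> R) (z k : Z),
    (forall i i', (1 <= i < i')%nat -> (i' <= d)%nat ->
       is_Leb (image_diff phi i i') (L i i')) /\
    (forall j, (1 <= j <= d)%nat -> is_inf (mu1_set phi psi j) (M j)) /\
    dim_sum d L = IZR z /\
    dim_sum d L + rsum d (fun j => INR j * M j) = IZR k * (INR b - 1).
Proof.
  destruct hphi as [[Hord [Hsr [Hc3 [Hpord [Hpsr Hcount]]]]] HZ].
  set (bb := INR b).
  assert (Hb : 0 < bb) by (apply lt_0_INR; lia).
  assert (Hdata : forall i, exists D : PData, (1 <= i <= d)%nat ->
       pieces bb (phi i) (IZR (pQ D)) (pm D) (pt D) (pc D) /\ pc D (pm D) = - IZR (pQ D) /\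
       (forall k, (k < pm D)%nat -> pc D k = pc D (S k) \/ exists z, bb * pt D (S k) = IZR z)).
  { intros i. destruct (classic (1 <= i <= d)%nat) as [Hi|Hi].
    - destruct (HZ i Hi) as [[Q HQ] Hdisc]. destruct (Hsr i Hi) as [Hsi Hrc].
      destruct (get_pieces b (phi i) (IZR Q) ltac:(lia) HQ Hrc) as [m [t [c [Hp Hcm]]]].
      exists (mkPD Q m t c). intros _. simpl. split; [exact Hp|split; [exact Hcm|]].
      intros k Hk. destruct (Req_dec (c k) (c (S k))) as [E|E]. left; auto. right.
      destruct (Hdisc (t (S k)) (not_cont bb (phi i) (IZR Q) m t c k Hb Hp Hk E)) as [z Hz].
      exists z. rewrite Hz. unfold bb in *. field. lra.
    - exists (mkPD 0 0 (fun _ => 0) (fun _ => 0)). intros; contradiction. }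
  apply choice in Hdata. destruct Hdata as [PD HPD].
  set (F := fun i => Fimg bb (pm (PD i)) (pt (PD i)) (pc (PD i))).
  assert (HF01 : forall i x, (1 <= i <= d)%nat -> F i x = 0 \/ F i x = 1).
  { intros i x Hi. destruct (HPD i Hi) as [Hp _]. apply (Fimg01 bb (phi i) _ _ _ _ Hb Hp (proj1 (Hsr i Hi))). }
  assert (HFiff : forall i x, (1 <= i <= d)%nat -> (F i x = 1 <-> exists q, phi i q = Some x)).
  { intros i x Hi. destruct (HPD i Hi) as [Hp _]. apply (Fimg_iff bb (phi i) _ _ _ _ Hb Hp (proj1 (Hsr i Hi))). }
  set (P := flat_map (fun i => map (ps bb (pt (PD i)) (pc (PD i))) (seq 0 (S (pm (PD i)))) ++
                               map (pe bb (pt (PD i)) (pc (PD i))) (seq 0 (pm (PD i)))) (seq 1 d)).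
  destruct (grid_exists P) as [n [g [Hg Hcov]]].
  assert (Hps : forall i, (1 <= i <= d)%nat -> forall k, (k <= pm (PD i))%nat ->
            exists j, (j <= n)%nat /\ g j = ps bb (pt (PD i)) (pc (PD i)) k).
  { intros i Hi k Hk. apply Hcov. unfold P. apply in_flat_map. exists i. split. apply in_seq; lia.
    apply in_app_iff; left. apply in_map. apply in_seq; lia. }
  assert (Hpe : forall i, (1 <= i <= d)%nat -> forall k, (k < pm (PD i))%nat ->
            exists j, (j <= n)%nat /\ g j = pe bb (pt (PD i)) (pc (PD i)) k).
  { intros i Hi k Hk. apply Hcov. unfold P. apply in_flat_map. exists i. split. apply in_seq; lia.
    apply in_app_iff; right. apply in_map. apply in_seq; lia. }
  assert (HFlow : forall i x, (1 <= i <= d)%nat -> x < g O -> F i x = 0).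
  { intros i x Hi Hx. apply (Fimg_low g n); auto. }
  assert (HFhigh : forall i x, (1 <= i <= d)%nat -> g n <= x -> F i x = 1).
  { intros i x Hi Hx. apply (Fimg_high g n); auto. }
  assert (HFcell : forall i k x, (1 <= i <= d)%nat -> (k < n)%nat -> g k <= x < g (S k) -> F i x = F i (g k)).
  { intros i k x Hi Hk Hx. apply (Fimg_cell g n); auto. }
  assert (HFdef : forall i, F i = Fimg bb (pm (PD i)) (pt (PD i)) (pc (PD i))) by reflexivity.
  clearbody F P.
  set (isS := fun (o : ER) => match o with Some _ => true | None => false end).
  set (Npsi := fun x => count_idx d (fun j => isS (psi j x))).
  assert (HC1 : forall x, INR (Npsi x) = rsum d (fun i => F i x)).
  { intros x.
    destruct (list_of_family (fun i q => (1 <= i <= d)%nat /\ phi i q = Some x) d) as [L [Hnd HL]].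
    { intros i q q' [Hi E1] [_ E2]. apply (si_inj (phi i) q q' x); auto. apply (Hsr i Hi). }
    assert (E1 : lsum L (fun q => count_idx d (fun i => eqb_ER (phi i q) (Some x))) =
                 lsum L (fun q => count_idx d (fun j => eqb_ER (psi j x) (Some q)))).
    { apply lsum_ext; intros; apply Hcount. }
    rewrite (lsum_ext L _ (fun q => nsum d (fun i => if eqb_ER (phi i q) (Some x) then 1%nat else 0%nat))) in E1
      by (intros; apply count_nsum).
    rewrite (lsum_ext L (fun q => count_idx d (fun j => eqb_ER (psi j x) (Some q)))
              (fun q => nsum d (fun j => if eqb_ER (psi j x) (Some q) then 1%nat else 0%nat))) in E1
      by (intros; apply count_nsum).
    rewrite !swap_nl in E1.
    rewrite (nsum_ext d _ (fun i => if excluded_middle_informative (exists q, phi i q = Some x) then 1%nat else 0%nat)) in E1.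
    2:{ intros i Hi. apply lsum_unique; auto.
        - intros q; apply eqb_ER_spec.
        - intros q q' E2 E3. apply (si_inj (phi i) q q' x); auto. apply (Hsr i Hi).
        - intros q Hq. apply HL. exists i; auto. }
    rewrite (nsum_ext d (fun i => lsum L (fun q => if eqb_ER (psi i x) (Some q) then 1%nat else 0%nat))
              (fun j => if excluded_middle_informative (exists q, psi j x = Some q) then 1%nat else 0%nat)) in E1.
    2:{ intros j Hj. apply lsum_unique; auto.
        - intros q; apply eqb_ER_spec.
        - intros q q' E2 E3. rewrite E2 in E3. injection E3; auto.
        - intros q Hq. apply HL.
          assert (Hc1 : (count_idx d (fun j => eqb_ER (psi j x) (Some q)) >= 1)%nat).
          { apply (count_ge1 d _ j Hj). apply eqb_ER_spec; auto. }
          rewrite <- Hcount in Hc1. destruct (count_pos _ _ Hc1) as [i [Hi Hp]].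
          exists i. split; auto. split; auto. apply eqb_ER_spec; auto. }
    unfold Npsi. rewrite count_nsum.
    rewrite (nsum_ext d _ (fun j => if excluded_middle_informative (exists q, psi j x = Some q) then 1%nat else 0%nat)).
    2:{ intros j Hj. unfold isS. destruct (psi j x) eqn:E; destruct excluded_middle_informative as [He|He]; auto.
        exfalso; apply He; eauto. destruct He as [q Hq]; discriminate. }
    rewrite <- E1, nsum_INR. apply rsum_ext. intros i Hi.
    destruct excluded_middle_informative as [He|He]; simpl.
    - symmetry; apply HFiff; auto.
    - destruct (HF01 i x Hi) as [E|E]; auto. exfalso; apply He. apply HFiff; auto. }
  assert (Hmono : forall x, mono (fun j => isS (psi j x)) d).
  { intros x j Hj E. unfold isS in *. pose proof (Hpord j Hj x). destruct (psi j x); try discriminate.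
    destruct (psi (S j) x); simpl in *; auto. }
  assert (Hkey : forall j x, (1 <= j <= d)%nat -> (isS (psi j x) = true <-> (d + 1 <= j + Npsi x)%nat)).
  { intros j x Hj. exact (mono_count d (fun j0 => isS (psi j0 x)) (Hmono x) j Hj). }
  assert (HNcell : forall k x, (k < n)%nat -> g k <= x < g (S k) -> Npsi x = Npsi (g k)).
  { intros k x Hk Hx. apply INR_eq. rewrite !HC1. apply rsum_ext. intros i Hi. apply HFcell; auto. }
  assert (HNhigh : forall x, g n <= x -> Npsi x = d).
  { intros x Hx. apply INR_eq. rewrite HC1, (rsum_ext d _ (fun _ => 1)), rsum_const. ring.
    intros i Hi; apply HFhigh; auto. }
  assert (HNlow : forall x, x < g O -> Npsi x = O).
  { intros x Hx. apply INR_eq. rewrite HC1, (rsum_ext d _ (fun _ => 0)), rsum_const. simpl; ring.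
    intros i Hi; apply HFlow; auto. }
  assert (HM : forall j, exists K, (1 <= j <= d)%nat -> (K <= n)%nat /\ forall x, (isS (psi j x) = true <-> g K <= x)).
  { intros j. destruct (classic (1 <= j <= d)%nat) as [Hj|Hj]; [|exists O; intros; contradiction].
    destruct (least_nat (fun k => isS (psi j (g k)) = true) n) as [K [HKn [HK1 HK2]]].
    { apply Hkey; auto. rewrite HNhigh; lra || lia. }
    exists K. intros _. split; auto. intros x. split; intro Hx.
    - destruct (Rlt_dec x (g O)). apply Hkey in Hx; auto. rewrite HNlow in Hx; auto. lia.
      destruct (Rle_dec (g n) x). apply Rle_trans with (g n); auto. apply (grid_le_iff g n Hg); lia.
      destruct (in_cell g n Hg x) as [k [Hk Hk2]]. lra.
      assert (isS (psi j (g k)) = true). { apply Hkey; auto. rewrite <- (HNcell k x); auto. apply Hkey; auto. }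
      destruct (le_lt_dec K k). apply Rle_trans with (g k). apply (grid_le_iff g n Hg); lia. lra.
      exfalso; apply (HK2 k); auto.
    - pose proof (proj1 (proj1 (Hpsr j Hj)) (g K) x Hx). unfold isS in *.
      destruct (psi j (g K)); try discriminate. destruct (psi j x); simpl in *; auto. }
  apply choice in HM. destruct HM as [Kf HKf].
  set (M := fun j => g (Kf j)).
  assert (HIge : forall j x, (1 <= j <= d)%nat -> Ige (M j) x = if isS (psi j x) then 1 else 0).
  { intros j x Hj. destruct (HKf j Hj) as [_ HK]. unfold Ige, M. destruct Rle_dec as [E|E];
    destruct (isS (psi j x)) eqn:E2; auto; exfalso. apply HK in E. congruence. apply E, HK; auto. }
  assert (HsumF : forall x, rsum d (fun i => F i x) = rsum d (fun j => Ige (M j) x)).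
  { intros x. rewrite <- HC1. unfold Npsi. rewrite count_INR. apply rsum_ext. intros j Hj. rewrite HIge; auto. }
  assert (HPhiF : forall G, (forall i, (1 <= i <= d)%nat -> Phi g n G (F i) =
            ssum (pm (PD i)) (fun k => G (pe bb (pt (PD i)) (pc (PD i)) k) - G (ps bb (pt (PD i)) (pc (PD i)) k))
            + (G (g n) - G (ps bb (pt (PD i)) (pc (PD i)) (pm (PD i)))))).
  { intros G i Hi. destruct (HPD i Hi) as [Hp _]. rewrite HFdef. apply (Phi_Fimg g n G bb (phi i) (IZR (pQ (PD i)))); auto.
    apply (Hsr i Hi). }
  assert (HPhiM : forall G j, (1 <= j <= d)%nat -> Phi g n G (Ige (M j)) = G (g n) - G (M j)).
  { intros G j Hj. unfold M. apply Phi_Ige; auto. apply (HKf j Hj). }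
  assert (HMZ : forall j, exists z, (1 <= j <= d)%nat -> M j = IZR z).
  { assert (E : rsum d (fun i => Phi g n Gs (F i)) = rsum d (fun j => Phi g n Gs (Ige (M j)))).
    { rewrite <- !Phi_rsum. apply Phi_ext. intros; apply HsumF. }
    rewrite (rsum_ext d _ (fun _ => Gs (g n) - Gs 0)) in E.
    2:{ intros i Hi. rewrite HPhiF by auto. destruct (HPD i Hi) as [Hp [Hcm Hdisc]].
        apply (Fimg_Gs_total bb (IZR (pQ (PD i))) _ _ _ _ (pQ (PD i))); auto.
        apply Hp. exists (Z.of_nat b * pQ (PD i))%Z. unfold bb. rewrite mult_IZR, <- INR_IZR_INZ. auto. }
    rewrite (rsum_ext d (fun j => Phi g n Gs (Ige (M j))) (fun j => Gs (g n) - Gs (M j))) in E.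
    2:{ intros; apply HPhiM; auto. }
    rewrite Gs0, rsum_const in E. unfold Rminus in E. rewrite rsum_plus, rsum_const in E.
    assert (E2 : rsum d (fun j => - Gs (M j)) = 0) by lra.
    intros j. destruct (classic (1 <= j <= d)%nat) as [Hj|Hj]; [|exists 0%Z; intros; contradiction].
    assert (E3 : rsum d (fun j => Gs (M j)) = 0).
    { assert (rsum d (fun j => - Gs (M j)) = -1 * rsum d (fun j => Gs (M j))).
      { rewrite <- rsum_scal. apply rsum_ext; intros; ring. }
      lra. }
    pose proof (rsum_nonneg_zero d (fun j => Gs (M j)) (fun j _ => Gs_nonneg (M j)) E3 j Hj) as E4.
    destruct (Gs_zero_int _ E4) as [z Hz]. exists z; auto. }
  apply choice in HMZ. destruct HMZ as [MZ HMZ].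
  assert (Hphi1 : forall i q, (1 <= i <= d)%nat -> ole (phi i q) (phi 1%nat q)).
  { intros i q Hi. induction i. lia. destruct (Nat.eq_dec i O). subst. apply ole_refl.
    apply ole_trans with (phi i q). apply Hord; lia. apply IHi; lia. }
  set (L := fun i i' => Phi g n (fun x => x) (fun x => F i' x * (1 - F i x))).
  assert (HPhiFid : forall i, (1 <= i <= d)%nat -> Phi g n (fun x => x) (F i) = g n - bb * IZR (pQ (PD i)) + IZR (pQ (PD i))).
  { intros i Hi. rewrite HPhiF by auto. destruct (HPD i Hi) as [Hp [Hcm _]].
    apply Fimg_id_total; auto. apply Hp. }
  assert (Hpt : forall x, rsum d (fun i' => rsum (i' - 1) (fun i => F i' x * (1 - F i x))) =
            rsum d (fun i => (INR i - 1 - INR d) * F i x) + rsum d (fun j => INR j * Ige (M j) x)).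
  { intros x.
    rewrite (rsum_ext d _ (fun i' => (INR i' - 1) * F i' x - F i' x * rsum (i' - 1) (fun i => F i x))).
    2:{ intros i' Hi'. rewrite <- (rsum_scal (i' - 1) (F i' x)).
        rewrite (rsum_ext (i'-1) _ (fun i => F i' x * 1 + (-1) * (F i' x * F i x))) by (intros; ring).
        rewrite rsum_plus, (rsum_scal (i'-1) (-1) (fun i => F i' x * F i x)), (rsum_scal (i'-1) (F i' x) (fun _ => 1)), rsum_const, minus_INR by lia. simpl INR. ring. }
    unfold Rminus at 1. rewrite rsum_plus.
    rewrite (rsum_ext d (fun i => - (F i x * rsum (i - 1) (fun i0 => F i0 x))) (fun i => -1 * (F i x * rsum (i - 1) (fun i0 => F i0 x)))) by (intros; ring).
    rewrite rsum_scal, pair_sum by (intros; apply HF01; auto).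
    rewrite (rsum_ext d (fun j => INR j * Ige (M j) x) (fun j => INR j * (if isS (psi j x) then 1 else 0)))
      by (intros; rewrite HIge; auto).
    rewrite (mono_sum d _ (Hmono x)). change (count_idx d (fun j => isS (psi j x))) with (Npsi x).
    rewrite HC1.
    rewrite (rsum_ext d (fun i => (INR i - 1 - INR d) * F i x) (fun i => (INR i - 1) * F i x + (- INR d) * F i x)) by (intros; ring).
    rewrite rsum_plus, rsum_scal. field. }
  assert (Hdim : dim_sum d L = rsum d (fun i => (INR i - 1 - INR d) * (g n - bb * IZR (pQ (PD i)) + IZR (pQ (PD i))))
                              + rsum d (fun j => INR j * (g n - M j))).
  { unfold dim_sum, L.
    rewrite (rsum_ext d _ (fun i' => Phi g n (fun x => x) (fun x => rsum (i' - 1) (fun i => F i' x * (1 - F i x))))).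
    2:{ intros i' Hi'. rewrite (Phi_rsum g n (fun x => x) (i' - 1) (fun i x => F i' x * (1 - F i x))). auto. }
    rewrite <- (Phi_rsum g n (fun x => x) d (fun i' x => rsum (i' - 1) (fun i => F i' x * (1 - F i x)))).
    rewrite (Phi_ext g n _ _ (fun x => rsum d (fun i => (INR i - 1 - INR d) * F i x) + rsum d (fun j => INR j * Ige (M j) x)))
      by (intros; apply Hpt).
    rewrite Phi_plus.
    rewrite (Phi_rsum g n (fun x => x) d (fun i x => (INR i - 1 - INR d) * F i x)).
    rewrite (Phi_rsum g n (fun x => x) d (fun j x => INR j * Ige (M j) x)).
    f_equal; apply rsum_ext; intros i Hi; rewrite Phi_scal.
    rewrite HPhiFid; auto. rewrite HPhiM; auto. }
  set (k := zsum d (fun i => ((Z.of_nat d + 1 - Z.of_nat i) * pQ (PD i))%Z)).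
  assert (Hk : dim_sum d L + rsum d (fun j => INR j * M j) = IZR k * (INR b - 1)).
  { rewrite Hdim. unfold k. rewrite IZR_zsum.
    rewrite (rsum_ext d (fun i => IZR ((Z.of_nat d + 1 - Z.of_nat i) * pQ (PD i))) (fun i => (INR d + 1 - INR i) * IZR (pQ (PD i)))).
    2:{ intros; rewrite mult_IZR, minus_IZR, plus_IZR, <- !INR_IZR_INZ. auto. }
    rewrite <- !rsum_plus. rewrite Rmult_comm, <- rsum_scal.
    rewrite (rsum_ext d _ (fun i => g n * (2 * INR i - 1 - INR d) + (INR b - 1) * ((INR d + 1 - INR i) * IZR (pQ (PD i))))).
    2:{ intros; unfold bb; ring. }
    rewrite rsum_plus, rsum_scal.
    rewrite (rsum_ext d (fun i => 2 * INR i - 1 - INR d) (fun i => 2 * INR i + (- 1 - INR d))) by (intros; ring).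
    rewrite rsum_plus, rsum_scal, rsum_id, rsum_const. field. }
  exists L, M, (k * (Z.of_nat b - 1) - zsum d (fun j => (Z.of_nat j * MZ j)%Z))%Z, k.
  split; [|split; [|split]].
  -
    intros i i' Hii' Hi'd. unfold L, Phi.
    apply (leb_grid g n (image_diff phi i i') (fun x => F i' x * (1 - F i x))); auto.
    + intros x. unfold image_diff. rewrite <- HFiff by lia. rewrite <- HFiff by lia.
      destruct (HF01 i x ltac:(lia)) as [E|E]; destruct (HF01 i' x ltac:(lia)) as [E'|E']; rewrite E, E';
        split; intros H; try lra; try tauto.
    + intros x. destruct (HF01 i x ltac:(lia)) as [E|E]; destruct (HF01 i' x ltac:(lia)) as [E'|E']; rewrite E, E';
        [left|right|left|left]; ring.
    + intros x [[q1 Hq1] Hn]. split.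
      * destruct (Rle_dec (g O) x); auto. exfalso.
        assert (F i' x = 1) by (apply HFiff; eauto; lia). rewrite HFlow in H; lia || lra.
      * destruct (Rlt_dec x (g n)); auto. exfalso. apply Hn, HFiff. lia. apply HFhigh; lia || lra.
    + intros kk x Hkk Hx. rewrite (HFcell i kk x), (HFcell i' kk x); auto; lia.
  -
    intros j Hj. destruct (HKf j Hj) as [HKn HK].
    assert (Hset : forall mu, mu1_set phi psi j mu <-> isS (psi j mu) = true).
    { intros mu. unfold mu1_set. split.
      - intros [H|[q [H _]]]. destruct (psi j mu) eqn:E; [reflexivity|simpl in H; destruct H].
        unfold isS; rewrite H; reflexivity.
      - intros H. unfold isS in H. destruct (psi j mu) as [q|] eqn:Eq; try discriminate.
        assert (Hc1 : (count_idx d (fun j0 => eqb_ER (psi j0 mu) (Some q)) >= 1)%nat).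
        { apply (count_ge1 d _ j Hj). apply eqb_ER_spec; auto. }
        rewrite <- Hcount in Hc1. destruct (count_pos _ _ Hc1) as [i [Hi Hp]]. apply eqb_ER_spec in Hp.
        pose proof (Hphi1 i q Hi) as Ho. rewrite Hp in Ho.
        destruct (phi 1%nat q) as [v|] eqn:Ev; simpl in Ho; [|contradiction].
        destruct Ho as [Hlt|Heq].
        + left. simpl. rewrite Ev. simpl. auto.
        + right. exists q. subst v. split; auto. split; auto.
          assert (count_idx 1 (fun i' => eqb_ER (phi i' q) (Some mu)) <= 1)%nat.
          { simpl. destruct eqb_ER; lia. }
          assert (count_idx j (fun j' => eqb_ER (psi j' mu) (Some q)) >= 1)%nat.
          { apply (count_ge1 j _ j). lia. apply eqb_ER_spec; auto. }
          lia. }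
    split.
    + intros s Hs. apply Hset, HK in Hs. auto.
    + intros m' Hm'. apply Hm'. apply Hset, HK. unfold M. lra.
  -
    assert (HMsum : rsum d (fun j => INR j * M j) = IZR (zsum d (fun j => (Z.of_nat j * MZ j)%Z))).
    { rewrite IZR_zsum. apply rsum_ext. intros j0 Hj0. rewrite (HMZ j0 Hj0), mult_IZR, INR_IZR_INZ. reflexivity. }
    rewrite minus_IZR, mult_IZR, minus_IZR, <- INR_IZR_INZ, <- HMsum. simpl IZR. lra.
  - exact Hk.
Qed.
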